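(* Let $\varphi$ be a multiplication of an infinite abelian group $A$. Then: (R) $\varphi$ is inertial if and only if either $A$ has finite torsion-free rank or $\varphi$ is multiplication by an integer; (L1) if $A$ is a $p$-group, then $\varphi$ is left-inertial if and only if either $\varphi$ is invertible, or $A$ satisfies the minimal condition and $\varphi\neq0$; (L2) if $0<r_0(A)<\infty$ and $\varphi$ is multiplication by $\frac{m}{n}$ with $m,n$ coprime integers, then $\varphi$ is left-inertial if and only if $A_{\pi(m)}$ satisfies the minimal condition and $\varphi\ne0$; (L3) if $r_0(A)=\infty$, then $\varphi$ is left-inertial if and only if $\varphi$ is multiplication by $\frac1n$ for some nonzero integer $n$.
   Context: Abelian groups are written additively. An endomorphism $\varphi$ of $A$ is inertial if $(\varphi(X)+X)/X$ is finite for every subgroup $X\le A$, and left-inertial if $X/(X\cap\varphi(X))$ is finite for every $X\le A$. Multiplications: if $A$ is periodic, a multiplication is the componentwise action of an element $(\alpha_p)_p\in\prod_p\mathbb{Z}_p$ of $p$-adic integers on the $p$-components; if $A$ is not periodic, a multiplication is multiplication by a rational $\frac mn$ ($m,n$ coprime), defined when $A$ is $\pi(n)$-divisible with $A_{\pi(n)}=0$ by $\varphi(nx)=mx$. $r_0(A)$ is the torsion-free rank; $\pi(m)$ is the set of prime divisors of $m$; $A_{\pi}$ is the $\pi$-component of $A$. An abelian group satisfies the minimal condition (Min) iff it is $F\oplus D$ with $F$ finite and $D$ a direct sum of finitely many Prüfer groups. *)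

(* Defs.v *)
From mathcomp Require Import all_boot all_order all_algebra.
Set Implicit Arguments. Unset Strict Implicit. Unset Printing Implicit Defensive.
Import Order.TTheory GRing.Theory Num.Theory.
Local Open Scope ring_scope.

Section Defs.
Variable A : zmodType.

Definition subgroup (X : A -> Prop) : Prop :=
  X 0 /\ (forall x y, X x -> X y -> X (x - y)).

Definition imageg (phi : A -> A) (X : A -> Prop) : A -> Prop :=
  fun y => exists x, X x /\ y = phi x.
Definition sumg (X Y : A -> Prop) : A -> Prop :=
  fun z => exists x y, X x /\ Y y /\ z = x + y.
Definition capg (X Y : A -> Prop) : A -> Prop := fun z => X z /\ Y z.

(* For subgroups X <= Y: the quotient Y/X is finite, i.e. Y is covered by
   finitely many cosets z + X with z in Y. *)
Definition fin_quot (Y X : A -> Prop) : Prop :=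
  exists s : seq A, (forall z, z \in s -> Y z) /\
    (forall y, Y y -> exists2 z, z \in s & X (y - z)).

Definition inertial (phi : A -> A) : Prop :=
  forall X, subgroup X -> fin_quot (sumg (imageg phi X) X) X.

Definition left_inertial (phi : A -> A) : Prop :=
  forall X, subgroup X -> fin_quot X (capg X (imageg phi X)).

Definition infinite_group : Prop := ~ (exists s : seq A, forall x : A, x \in s).

Definition periodic : Prop := forall x : A, exists2 k : nat, (0 < k)%N & x *+ k = 0.

Definition p_group (p : nat) : Prop := forall x : A, exists k : nat, x *+ (p ^ k) = 0.

Definition lin_indep (s : seq A) : Prop :=
  forall c : seq int, size c = size s ->
    \sum_(i < size s) (s`_i *~ c`_i) = 0 -> forall i, c`_i = 0.

Definition finite_tf_rank : Prop :=
  exists n : nat, forall s : seq A, lin_indep s -> (size s <= n)%N.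

Definition infinite_tf_rank : Prop :=
  forall n : nat, exists s : seq A, lin_indep s /\ size s = n.

Definition pi_component (m : int) : A -> Prop :=
  fun x => exists k : nat, [/\ (0 < k)%N,
    (forall p, prime p -> (p %| k)%N -> (p %| absz m)%N) & x *+ k = 0].

Definition min_cond (S : A -> Prop) : Prop :=
  forall X : nat -> A -> Prop,
    (forall i, subgroup (X i)) ->
    (forall i, forall x, X i x -> S x) ->
    (forall i, forall x, X i.+1 x -> X i x) ->
    exists N, forall i, (N <= i)%N -> forall x, X i x <-> X N x.

Definition endo (phi : A -> A) : Prop := forall x y, phi (x + y) = phi x + phi y.

(* multiplication by an element (alpha_p)_p of prod_p Z_p on a periodic group:
   alpha p k is the residue of alpha_p modulo p^k (compatible system),
   and alpha_p acts on the p-component; an element killed by p^k is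
   multiplied by alpha_p mod p^k. *)
Definition padic_mult (phi : A -> A) : Prop :=
  endo phi /\ exists alpha : nat -> nat -> int,
    (forall p k, prime p -> (alpha p k.+1 = alpha p k %[mod (p ^ k)%:Z])%Z) /\
    (forall p k x, prime p -> x *+ (p ^ k) = 0 -> phi x = x *~ alpha p k).

(* multiplication by the rational m/n, m n coprime: requires A to be
   pi(n)-divisible with A_{pi(n)} = 0, and phi (n x) = m x *)
Definition rat_mult (m n : int) (phi : A -> A) : Prop :=
  [/\ n != 0, coprimez m n,
      (forall p, prime p -> (p %| absz n)%N -> forall x : A, exists y, y *+ p = x),
      (forall x, pi_component n x -> x = 0) &
      forall x, phi (x *~ n) = x *~ m].

Definition multiplication (phi : A -> A) : Prop :=
  endo phi /\
  (periodic -> padic_mult phi) /\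
  (~ periodic -> exists m n : int, rat_mult m n phi).

Definition int_mult (phi : A -> A) : Prop := exists z : int, forall x, phi x = x *~ z.

Definition nonzero_map (phi : A -> A) : Prop := exists x, phi x != 0.

End Defs.

(* Main.v *)
Require Import Defs.
From mathcomp Require Import all_boot all_order all_algebra.
From Stdlib Require Import ClassicalEpsilon Classical.
Set Implicit Arguments. Unset Strict Implicit. Unset Printing Implicit Defensive.
Import Order.TTheory GRing.Theory Num.Theory.
Local Open Scope ring_scope.

Lemma sg0 (A : zmodType) (X : A -> Prop) : subgroup X -> X 0.
Proof. by case. Qed.
Lemma sgB (A : zmodType) (X : A -> Prop) x y : subgroup X -> X x -> X y -> X (x - y).
Proof. by case=> _ H; apply: H. Qed.
Lemma sgN (A : zmodType) (X : A -> Prop) x : subgroup X -> X x -> X (- x).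
Proof. move=> sX Hx; rewrite -sub0r; exact: sgB (sg0 sX) Hx. Qed.
Lemma sgD (A : zmodType) (X : A -> Prop) x y : subgroup X -> X x -> X y -> X (x + y).
Proof. move=> sX Hx Hy; rewrite -[y]opprK; exact: sgB Hx (sgN sX Hy). Qed.
Lemma sgMn (A : zmodType) (X : A -> Prop) x k : subgroup X -> X x -> X (x *+ k).
Proof. move=> sX Hx; elim: k => [|k IH]; first by rewrite mulr0n; exact: sg0.
by rewrite mulrS; apply: sgD. Qed.
Lemma sgMz (A : zmodType) (X : A -> Prop) x z : subgroup X -> X x -> X (x *~ z).
Proof. move=> sX Hx; case: z => k; first exact: sgMn.
rewrite NegzE mulrNz; apply: sgN=> //; exact: sgMn. Qed.
Lemma sg_sum (A : zmodType) (X : A -> Prop) (I : Type) (r : seq I) (F : I -> A) :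
  subgroup X -> (forall i, X (F i)) -> X (\sum_(i <- r) F i).
Proof. move=> sX H; elim: r => [|a r IH]; first by rewrite big_nil; exact: sg0.
by rewrite big_cons; apply: sgD. Qed.
Lemma sg_sumP (A : zmodType) (X : A -> Prop) (I : Type) (r : seq I) (P : pred I) (F : I -> A) :
  subgroup X -> (forall i, P i -> X (F i)) -> X (\sum_(i <- r | P i) F i).
Proof. move=> sX H; elim: r => [|a r IH]; first by rewrite big_nil; exact: sg0.
rewrite big_cons; case: ifP => Pa //; by apply: sgD => //; apply: H. Qed.

Lemma sg_true (A : zmodType) : subgroup (fun _ : A => True).
Proof. by split. Qed.
Lemma sg_zero (A : zmodType) : subgroup (fun x : A => x = 0).
Proof. by split=> // x y -> ->; rewrite subr0. Qed.

Definition nmul (A : zmodType) (q : nat) (X : A -> Prop) : A -> Prop :=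
  fun y => exists x, X x /\ y = x *+ q.

Lemma sg_nmul (A : zmodType) q (X : A -> Prop) : subgroup X -> subgroup (nmul q X).
Proof. move=> sX; split; first by exists 0; rewrite mul0rn; split=> //; exact: sg0.
move=> _ _ [x [Hx ->]] [y [Hy ->]]; exists (x - y); split; first exact: sgB.
by rewrite mulrnBl. Qed.
Lemma nmul_sub (A : zmodType) q (X : A -> Prop) : subgroup X -> forall y, nmul q X y -> X y.
Proof. by move=> sX _ [x [Hx ->]]; apply: sgMn. Qed.
Lemma nmulM (A : zmodType) a b (X : A -> Prop) y :
  nmul a (nmul b X) y <-> nmul (b * a) X y.
Proof. split; first by move=> [_ [[x [Hx ->]] ->]]; exists x; rewrite mulrnA.
by move=> [x [Hx ->]]; exists (x *+ b); split; [exists x|rewrite mulrnA]. Qed.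
Lemma nmul1 (A : zmodType) (X : A -> Prop) y : nmul 1 X y <-> X y.
Proof. by split; [move=> [x [Hx ->]]|move=> Hy; exists y]. Qed.

Lemma sg_sumg (A : zmodType) (X Y : A -> Prop) :
  subgroup X -> subgroup Y -> subgroup (sumg X Y).
Proof. move=> sX sY; split; first by exists 0, 0; rewrite addr0; split; [exact: sg0|split=>//; exact: sg0].
move=> _ _ [x1 [y1 [H1 [H2 ->]]]] [x2 [y2 [H3 [H4 ->]]]].
exists (x1 - x2), (y1 - y2); split; first exact: sgB.
split; first exact: sgB. by rewrite opprD addrACA. Qed.
Lemma sg_capg (A : zmodType) (X Y : A -> Prop) :
  subgroup X -> subgroup Y -> subgroup (capg X Y).
Proof. move=> sX sY; split; first by split; apply: sg0.
by move=> x y [? ?] [? ?]; split; apply: sgB. Qed.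

Lemma endo0 (A : zmodType) (phi : A -> A) : endo phi -> phi 0 = 0.
Proof. by move=> e; apply: (@addrI _ (phi 0)); rewrite -e !addr0. Qed.
Lemma endoN (A : zmodType) (phi : A -> A) x : endo phi -> phi (- x) = - phi x.
Proof. by move=> e; apply/eqP; rewrite -subr_eq0 opprK -e addNr (endo0 e). Qed.
Lemma endoB (A : zmodType) (phi : A -> A) x y : endo phi -> phi (x - y) = phi x - phi y.
Proof. by move=> e; rewrite e endoN. Qed.
Lemma endoMn (A : zmodType) (phi : A -> A) x k : endo phi -> phi (x *+ k) = phi x *+ k.
Proof. move=> e; elim: k => [|k IH]; first by rewrite !mulr0n (endo0 e).
by rewrite !mulrS e IH. Qed.
Lemma endoMz (A : zmodType) (phi : A -> A) x z : endo phi -> phi (x *~ z) = phi x *~ z.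
Proof. move=> e; case: z => k; first exact: endoMn.
by rewrite NegzE !mulrNz endoN // endoMn. Qed.
Lemma sg_image (A : zmodType) (phi : A -> A) (X : A -> Prop) :
  endo phi -> subgroup X -> subgroup (imageg phi X).
Proof. move=> e sX; split; first by exists 0; split; [exact: sg0|rewrite endo0].
move=> _ _ [x [Hx ->]] [y [Hy ->]]; exists (x - y); split; [exact: sgB|by rewrite endoB]. Qed.

Lemma fq_refl (A : zmodType) (X : A -> Prop) : subgroup X -> fin_quot X X.
Proof. move=> sX; exists [:: 0]; split; first by move=> z; rewrite inE => /eqP ->; exact: sg0.
by move=> y Hy; exists 0; rewrite ?inE ?subr0. Qed.
Lemma fq_sub (A : zmodType) (Y X : A -> Prop) : subgroup X ->
  (forall y, Y y -> X y) -> (Y 0) -> fin_quot Y X.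
Proof. move=> sX H Y0; exists [:: 0]; split; first by move=> z; rewrite inE => /eqP ->.
by move=> y Hy; exists 0; rewrite ?inE ?subr0 //; apply: H. Qed.
Lemma fq_mono (A : zmodType) (Y X X' : A -> Prop) :
  (forall x, X x -> X' x) -> fin_quot Y X -> fin_quot Y X'.
Proof. move=> H [s [H1 H2]]; exists s; split=> // y /H2 [z zs Hz]; exists z => //; exact: H. Qed.
Lemma fq_trans (A : zmodType) (Y Z W : A -> Prop) : subgroup Y ->
  (forall z, Z z -> Y z) -> fin_quot Y Z -> fin_quot Z W -> fin_quot Y W.
Proof. move=> sY ZY [s1 [H1 H2]] [s2 [H3 H4]].
exists [seq a + b | a <- s1, b <- s2]; split.
  move=> z /allpairsP [[a b] /= [ha hb ->]]; apply: sgD => //; [exact: H1| apply: ZY; exact: H3].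
move=> y /H2 [a ha /H4 [b hb Hb]]; exists (a + b); first exact: allpairs_f.
by rewrite opprD addrA. Qed.
Lemma fq_ext (A : zmodType) (Y Y' X : A -> Prop) :
  (forall y, Y y <-> Y' y) -> fin_quot Y X -> fin_quot Y' X.
Proof. move=> H [s [H1 H2]]; exists s; split=> [z /H1 /H|y /H /H2] //. Qed.

Lemma fchoice_in (T : Type) (P : pred nat) (R : nat -> T -> Prop) (d : T) :
  (forall j, P j -> exists v, R j v) -> exists F : nat -> T, forall j, P j -> R j (F j).
Proof. move=> H.
have H' : forall j, exists v, P j -> R j v.
  move=> j; case Pj: (P j); last by exists d.
  by case: (H j Pj) => v Hv; exists v.
exists (fun j => proj1_sig (constructive_indefinite_description _ (H' j))).
move=> j Pj; exact: (proj2_sig (constructive_indefinite_description _ (H' j)) Pj).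
Qed.

Definition lcf (A : zmodType) (s : seq A) (f : nat -> int) : A :=
  \sum_(0 <= i < size s) s`_i *~ f i.
Definition spn (A : zmodType) (s : seq A) : A -> Prop := fun y => exists f, y = lcf s f.

Lemma lcf_nil (A : zmodType) f : lcf ([::] : seq A) f = 0.
Proof. by rewrite /lcf big_geq. Qed.
Lemma lcf_cons (A : zmodType) (x : A) s f :
  lcf (x :: s) f = x *~ f 0%N + lcf s (fun k => f k.+1).
Proof. by rewrite /lcf /= big_nat_recl. Qed.
Lemma lcf_rcons (A : zmodType) (x : A) s f :
  lcf (rcons s x) f = lcf s f + x *~ f (size s).
Proof. rewrite /lcf size_rcons big_nat_recr //= nth_rcons ltnn eqxx; congr (_ + _).
by apply: eq_big_nat => i /andP [_ hi]; rewrite nth_rcons hi. Qed.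
Lemma lcf_ext (A : zmodType) (s : seq A) f g :
  (forall i, (i < size s)%N -> f i = g i) -> lcf s f = lcf s g.
Proof. by move=> H; apply: eq_big_nat => i /andP [_ hi]; rewrite H. Qed.
Lemma lcfB (A : zmodType) (s : seq A) f g :
  lcf s (fun k => f k - g k) = lcf s f - lcf s g.
Proof. rewrite /lcf -sumrB; apply: eq_big_nat => i _; exact: mulrzBr. Qed.
Lemma lcfD (A : zmodType) (s : seq A) f g :
  lcf s (fun k => f k + g k) = lcf s f + lcf s g.
Proof. rewrite /lcf -big_split; apply: eq_big_nat => i _; exact: mulrzDr. Qed.
Lemma lcfZ (A : zmodType) (s : seq A) f a :
  lcf s (fun k => f k * a) = lcf s f *~ a.
Proof. rewrite /lcf mulrz_suml; apply: eq_big_nat => i _; exact: mulrzA. Qed.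
Lemma lcf0 (A : zmodType) (s : seq A) : lcf s (fun _ => 0) = 0.
Proof. by rewrite /lcf big1. Qed.

Lemma sum_delta (A : zmodType) (n i : nat) (F : nat -> A) : (i < n)%N ->
  \sum_(0 <= k < n) (if k == i then F k else 0) = F i.
Proof. elim: n => [//|n IH] hi; rewrite big_nat_recr //=.
case: (ltngtP i n) => [hlt|hgt|<-].
- by rewrite IH // addr0.
- by move: hi; rewrite ltnS leqNgt hgt.
- rewrite big1_seq ?add0r // => k /andP [_]; rewrite mem_index_iota => /andP [_ hk].
  by rewrite (ltn_eqF hk).
Qed.

Lemma lcf_delta (A : zmodType) (s : seq A) i a : (i < size s)%N ->
  lcf s (fun k => if k == i then a else 0) = s`_i *~ a.
Proof. move=> hi; rewrite /lcf -(sum_delta (fun k => s`_k *~ a) hi).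
by apply: eq_big_nat => k _; case: eqP. Qed.

Lemma sg_span (A : zmodType) (s : seq A) : subgroup (spn s).
Proof. split; first by exists (fun _ => 0); rewrite lcf0.
by move=> _ _ [f ->] [g ->]; exists (fun k => f k - g k); rewrite lcfB. Qed.
Lemma lcf_in (A : zmodType) (X : A -> Prop) (s : seq A) f : subgroup X ->
  (forall i, (i < size s)%N -> X s`_i) -> X (lcf s f).
Proof. move=> sX H; rewrite /lcf big_seq_cond; apply: sg_sumP => // i.
rewrite mem_index_iota andbT => /andP [_ hi]; apply: sgMz => //; exact: H. Qed.
Lemma span_in (A : zmodType) (X : A -> Prop) (s : seq A) y : subgroup X ->
  (forall i, (i < size s)%N -> X s`_i) -> spn s y -> X y.
Proof. by move=> sX H [f ->]; apply: lcf_in. Qed.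

Lemma lcf_big (A : zmodType) (s : seq A) (c : seq int) : size c = size s ->
  \sum_(i < size s) s`_i *~ c`_i = lcf s (nth 0 c).
Proof. by move=> _; rewrite /lcf big_mkord. Qed.

Lemma indep_coef (A : zmodType) (s : seq A) f : lin_indep s -> lcf s f = 0 ->
  forall i, (i < size s)%N -> f i = 0.
Proof. move=> H Hf i hi.
have := H (mkseq f (size s)); rewrite size_mkseq => /(_ erefl).
rewrite lcf_big ?size_mkseq // => H'.
have E : lcf s (nth 0 (mkseq f (size s))) = lcf s f.
  by apply: lcf_ext => k hk; rewrite nth_mkseq.
by have := H' (etrans E Hf) i; rewrite nth_mkseq. Qed.

Lemma indep_of (A : zmodType) (s : seq A) :
  (forall f, lcf s f = 0 -> forall i, (i < size s)%N -> f i = 0) -> lin_indep s.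
Proof. move=> H c hc; rewrite lcf_big // => E i.
case: (ltnP i (size s)) => hi; first exact: H E i hi.
by rewrite nth_default // hc. Qed.

Lemma indep_nil (A : zmodType) : lin_indep ([::] : seq A).
Proof. by apply: indep_of. Qed.

Lemma sum_delta_seq (A : zmodType) (r : seq nat) j0 (F : nat -> A) :
  uniq r -> j0 \in r -> \sum_(j <- r) (if j == j0 then F j else 0) = F j0.
Proof. move=> ur hj; rewrite (big_rem j0 hj) /= eqxx big1_seq ?addr0 //.
move=> j /andP [_]; rewrite (mem_rem_uniq _ ur) /= => /andP [hj0 _].
by rewrite (negbTE hj0). Qed.

Lemma steinitz (A : zmodType) (t : seq A) : forall (r : seq nat) (y : nat -> A),
  uniq r -> (size t < size r)%N ->
  (forall j, j \in r -> exists2 c : int, c != 0 & spn t (y j *~ c)) ->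
  exists f : nat -> int, \sum_(j <- r) y j *~ f j = 0 /\ exists2 j, j \in r & f j != 0.
Proof.
elim: t => [|x t IH] r y ur hs H.
  case: r ur hs H => [//|j0 r'] ur _ H.
  have [c c0 [g Hg]] := H j0 (mem_head _ _).
  exists (fun j => if j == j0 then c else 0); split; last by exists j0; rewrite ?mem_head ?eqxx.
  rewrite (eq_bigr (fun j => if j == j0 then y j *~ c else 0)); last by move=> j _; case: eqP.
  by rewrite (sum_delta_seq (fun j => y j *~ c) ur (mem_head _ _)) Hg lcf_nil.
have [F HF] : exists F : nat -> int * int * (nat -> int), forall j, j \in r ->
    (F j).1.1 != 0 /\ y j *~ (F j).1.1 = x *~ (F j).1.2 + lcf t (F j).2.
  apply: (@fchoice_in (int * int * (nat -> int)) (fun j => j \in r)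
    (fun j v => v.1.1 != 0 /\ y j *~ v.1.1 = x *~ v.1.2 + lcf t v.2) (0, 0, fun _ => 0)).
  move=> j /H [c c0 [g Hg]].
  by exists (c, g 0%N, fun k => g k.+1) => /=; split => //; rewrite Hg lcf_cons.
pose c j := (F j).1.1; pose a j := (F j).1.2; pose g j := (F j).2.
case: (classic (forall j, j \in r -> a j = 0)) => [Ha|].
  apply: IH => //; first by apply: ltn_trans hs.
  move=> j hj; exists (c j); first by case: (HF j hj).
  by exists (g j); case: (HF j hj) => _ ->; have := Ha j hj; rewrite /a => ->; rewrite mulr0z add0r.
move=> Hn; have [j0 Hj0] := not_all_ex_not _ _ Hn; have [hj0 Ha0] := imply_to_and _ _ Hj0.
have a0 : a j0 != 0 by apply/eqP.
pose r' := rem j0 r.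
pose z j := y j *~ (c j * a j0) - y j0 *~ (c j0 * a j).
have ur' : uniq r' by apply: rem_uniq.
have hs' : (size t < size r')%N.
  by rewrite /r' size_rem //; move: hs => /=; case: (size r).
have [e [He [j1 hj1 e0]]] : exists f : nat -> int, \sum_(j <- r') z j *~ f j = 0 /\ exists2 j, j \in r' & f j != 0.
  apply: IH => // j hj; have hjr : j \in r by move: hj; rewrite /r' => /mem_rem.
  exists 1 => //; exists (fun k => g j k * a j0 - g j0 k * a j).
  rewrite mulr1z lcfB !lcfZ /z !mulrzA.
  case: (HF j hjr) => _ ->; case: (HF j0 hj0) => _ ->.
  rewrite !mulrzDl -/(a j) -/(a j0) -/(g j) -/(g j0) mulrzAC.
  by rewrite opprD addrACA subrr add0r.
pose S := \sum_(k <- r') c j0 * a k * e k.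
exists (fun j => if j == j0 then - S else c j * a j0 * e j); split.
  rewrite (big_rem j0 hj0) /= eqxx -/r'.
  rewrite (eq_big_seq (fun j => z j *~ e j + y j0 *~ (c j0 * a j * e j))); last first.
    move=> j; rewrite /r' (mem_rem_uniq _ ur) /= => /andP [hj _].
    by rewrite (negbTE hj) /z mulrzDl mulNrz -!mulrzA subrK.
  by rewrite big_split /= He add0r -mulrz_sumr -/S mulrNz addNr.
exists j1; first by move: hj1; rewrite /r' => /mem_rem.
have hj1r : j1 \in r by move: hj1; rewrite /r' => /mem_rem.
move: hj1; rewrite /r' (mem_rem_uniq _ ur) /= => /andP [hj _]; rewrite (negbTE hj).
rewrite !mulf_neq0 //; by case: (HF j1 hj1r).
Qed.

Lemma lcfN (A : zmodType) (s : seq A) f : lcf s (fun k => - f k) = - lcf s f.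
Proof. by rewrite -[RHS]sub0r -(lcf0 s) -lcfB; apply: lcf_ext => i _; rewrite sub0r. Qed.

Lemma indep_extend (A : zmodType) (t : seq A) : lin_indep t ->
  (exists s : seq A, lin_indep s /\ (size t < size s)%N) -> exists y, lin_indep (rcons t y).
Proof.
move=> It [s [Is hs]]; apply: NNPP => Hn.
have Hdep : forall j, j \in iota 0 (size s) ->
    exists2 c : int, c != 0 & spn t (s`_j *~ c).
  move=> j _; set y := s`_j.
  have Hni : ~ lin_indep (rcons t y) by move=> H; apply: Hn; exists y.
  apply: NNPP => Hc; apply: Hni; apply: indep_of => f Hf i hi.
  rewrite lcf_rcons in Hf.
  have fs : f (size t) = 0.
    apply: NNPP => fs0; apply: Hc; exists (f (size t)); first by apply/eqP.
    exists (fun k => - f k); rewrite lcfN; apply/eqP; rewrite -addr_eq0 addrC Hf //.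
  move: Hf; rewrite fs mulr0z addr0 => Hf.
  move: hi; rewrite size_rcons ltnS leq_eqVlt => /orP [/eqP -> //|hi].
  exact: indep_coef It Hf i hi.
have hs' : (size t < size (iota 0 (size s)))%N by rewrite size_iota.
have [f [Hf [j hj fj]]] := steinitz (iota_uniq 0 (size s)) hs' Hdep.
apply: (negP fj); apply/eqP; apply: (indep_coef Is); last by move: hj; rewrite mem_iota.
by rewrite /lcf /index_iota subn0.
Qed.

Lemma indep_seq (A : zmodType) :
  (forall N, exists s : seq A, lin_indep s /\ (N < size s)%N) ->
  exists x : nat -> A, forall M, lin_indep (mkseq x M).
Proof.
move=> HN.
have H : forall t : seq A, exists y, lin_indep t -> lin_indep (rcons t y).
  move=> t; case: (classic (lin_indep t)) => It; last by exists 0.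
  by have [y Hy] := indep_extend It (HN (size t)); exists y.
pose nx t := proj1_sig (constructive_indefinite_description _ (H t)).
have Hnx : forall t, lin_indep t -> lin_indep (rcons t (nx t)).
  move=> t; exact: (proj2_sig (constructive_indefinite_description _ (H t))).
pose sq := fix sq n := if n is n'.+1 then rcons (sq n') (nx (sq n')) else [::].
exists (fun i => nx (sq i)).
have E : forall M, sq M = mkseq (fun i => nx (sq i)) M.
  by elim=> [//|M IH]; rewrite mkseqS -IH.
move=> M; rewrite -E; elim: M => [|M IH]; [exact: indep_nil | exact: Hnx].
Qed.

Lemma pigeon (A : zmodType) (Q : A -> Prop) (z : seq A) (w : nat -> A) : subgroup Q ->
  (forall i, (i <= size z)%N -> exists2 k, k \in z & Q (w i - k)) ->
  exists i j, [/\ (i <= size z)%N, (j <= size z)%N, i != j & Q (w i - w j)].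
Proof.
move=> sQ H; set L := size z.
have HF : forall i : 'I_L.+1, exists k : 'I_L, Q (w i - z`_k).
  move=> i; have [k kz Hk] := H i (ltn_ord i).
  have hk : (index k z < L)%N by rewrite index_mem.
  by exists (Ordinal hk); rewrite /= nth_index.
pose F i := proj1_sig (constructive_indefinite_description _ (HF i)).
have HFs : forall i : 'I_L.+1, Q (w i - z`_(F i)).
  move=> i; exact: (proj2_sig (constructive_indefinite_description _ (HF i))).
case: (classic (injective F)) => Hinj.
  by have := leq_card F Hinj; rewrite !card_ord ltnn.
have [i1 Hi1] := not_all_ex_not _ _ Hinj.
have [i2 Hi2] := not_all_ex_not _ _ Hi1.
have [E ne] := imply_to_and _ _ Hi2.
exists i1, i2; split; [exact: (ltn_ord i1)|exact: (ltn_ord i2)| |].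
  by apply/eqP => /val_inj.
have -> : w i1 - w i2 = (w i1 - z`_(F i2)) - (w i2 - z`_(F i2)) by rewrite opprB addrA subrK.
by rewrite -{1}E; exact: sgB sQ (HFs i1) (HFs i2).
Qed.

Lemma core_rel (A : zmodType) (x : nat -> A) M i j a b g :
  lin_indep (mkseq x M) -> (i < M)%N -> (j < M)%N -> i != j ->
  (x i - x j) *~ a = lcf (mkseq x M) g *~ b -> a = g i * b.
Proof.
move=> I hi hj ij E.
pose h k := (if k == i then a else 0) - (if k == j then a else 0) - g k * b.
have H0 : lcf (mkseq x M) h = 0.
  rewrite /h !lcfB lcfZ !lcf_delta ?size_mkseq // !nth_mkseq //.
  by rewrite -mulrzBl E subrr.
have := indep_coef I H0 (i := i); rewrite size_mkseq => /(_ hi).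
rewrite /h eqxx (negbTE ij) subr0 => /eqP; rewrite subr_eq0 => /eqP //.
Qed.

Definition ispan (A : zmodType) (x : nat -> A) : A -> Prop :=
  fun y => exists M g, y = lcf (mkseq x M) g.

Lemma lcf_mk_ext (A : zmodType) (x : nat -> A) M M' g : (M <= M')%N ->
  lcf (mkseq x M) g = lcf (mkseq x M') (fun k => if (k < M)%N then g k else 0).
Proof.
move=> hM; rewrite /lcf !size_mkseq (@big_cat_nat _ _ _ M 0 M') //=.
rewrite [X in _ + X]big1_seq ?addr0; last first.
  move=> k /andP [_]; rewrite mem_index_iota => /andP [hk _].
  by rewrite ltnNge hk mulr0z.
apply: eq_big_nat => k /andP [_ hk]; rewrite hk !nth_mkseq //.
exact: leq_trans hk hM.
Qed.

Lemma sg_ispan (A : zmodType) (x : nat -> A) : subgroup (ispan x).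
Proof.
split; first by exists 0%N, (fun _ => 0); rewrite lcf0.
move=> _ _ [M1 [g1 ->]] [M2 [g2 ->]].
exists (maxn M1 M2), (fun k => (if (k < M1)%N then g1 k else 0) - (if (k < M2)%N then g2 k else 0)).
by rewrite lcfB -!lcf_mk_ext // ?leq_maxl ?leq_maxr.
Qed.

Lemma ispan_x (A : zmodType) (x : nat -> A) i : ispan x (x i).
Proof.
exists i.+1, (fun k => if k == i then 1 else 0).
by rewrite lcf_delta ?size_mkseq // nth_mkseq.
Qed.

Lemma nmul_z (A : zmodType) (X : A -> Prop) (p : nat) x (z : int) : subgroup X -> X x ->
  nmul p X (x *~ (z * (Posz p))).
Proof. by move=> sX Hx; exists (x *~ z); split; [apply: sgMz|rewrite mulrzA -pmulrn]. Qed.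

Lemma cover_span (A : zmodType) (X : A -> Prop) (p : nat) (t : seq A) :
  subgroup X -> (0 < p)%N -> (forall i, (i < size t)%N -> X t`_i) ->
  exists s : seq A, (forall z, z \in s -> X z) /\
    forall g, exists2 z, z \in s & nmul p X (lcf t g - z).
Proof.
move=> sX p0; elim: t => [|y t IH] Ht.
  exists [:: 0]; split; first by move=> z; rewrite inE => /eqP ->; exact: sg0.
  move=> g; exists 0; rewrite ?inE // lcf_nil subr0; exists 0; split; [exact: sg0|by rewrite mul0rn].
have [s [Hs Hg]] : exists s : seq A, (forall z, z \in s -> X z) /\
    forall g, exists2 z, z \in s & nmul p X (lcf t g - z).
  by apply: IH => i hi; apply: (Ht i.+1).
have Xy : X y by apply: (Ht 0%N).
exists [seq y *+ a + z | a <- iota 0 p, z <- s]; split.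
  move=> z /allpairsP [[a b] /= [_ hb ->]]; apply: sgD => //; [exact: sgMn|exact: Hs].
move=> g; have [z zs Hz] := Hg (fun k => g k.+1).
have p0' : (0 < (Posz p)) by rewrite ltz_nat.
set a := absz ((g 0%N) %% p)%Z.
have ha : a%:Z = ((g 0%N) %% p)%Z.
  by rewrite /a gez0_abs // modz_ge0 // gt_eqF.
exists (y *+ a + z); first apply: allpairs_f => //.
  by rewrite mem_iota add0n -ltz_nat ha ltz_pmod.
rewrite lcf_cons opprD addrACA.
have -> : y *~ g 0%N - y *+ a = y *~ ((g 0%N %/ p)%Z * (Posz p)).
  by rewrite pmulrn ha -mulrzBr {1}(divz_eq (g 0%N) p) addrK.
apply: sgD; [exact: sg_nmul|exact: nmul_z|exact: Hz].
Qed.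

Lemma bounded_max (P : nat -> Prop) r : P 0%N -> (forall k, P k -> (k <= r)%N) ->
  exists k, P k /\ forall k', P k' -> (k' <= k)%N.
Proof.
move=> P0 Hb.
suff : forall d m, P m -> (forall k, P k -> (k <= m + d)%N) ->
  exists k, P k /\ forall k', P k' -> (k' <= k)%N.
  by move/(_ r 0%N P0); apply.
elim=> [|d IH] m Pm Hm.
  by exists m; split => // k' /Hm; rewrite addn0.
case: (classic (exists k, P k /\ (m < k)%N)) => [[k [Pk mk]]|Hn].
  apply: (IH k Pk) => k' /Hm Hk'; apply: leq_trans Hk' _.
  by rewrite addnS -addSn leq_add2r.
exists m; split => // k' Pk'; rewrite leqNgt; apply/negP => h; apply: Hn; by exists k'.
Qed.

Definition pfree (A : zmodType) (W : A -> Prop) (p : nat) (t : seq A) :=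
  forall f, W (lcf t f) -> forall j, (j < size t)%N -> ((Posz p) %| f j)%Z.

Lemma rank_quot (A : zmodType) (X W : A -> Prop) (p r : nat) :
  prime p -> subgroup X -> subgroup W -> (forall x, nmul p X x -> W x) ->
  (forall x, W x -> X x) ->
  (forall ys : seq A, (forall i, (i < size ys)%N -> X ys`_i) -> (r < size ys)%N ->
     exists f, W (lcf ys f) /\ exists2 j, (j < size ys)%N & ~~ ((Posz p) %| f j)%Z) ->
  fin_quot X W.
Proof.
move=> pp sX sW pXW WX HD.
pose P k := exists t : seq A, [/\ size t = k, (forall i, (i < size t)%N -> X t`_i) & pfree W p t].
have P0 : P 0%N by exists [::]; split => // f _ j.
have Pb : forall k, P k -> (k <= r)%N.
  move=> k [t [<- Ht Ft]]; rewrite leqNgt; apply/negP => hr.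
  have [f [Wf [j hj nd]]] := HD t Ht hr.
  by move: nd; rewrite Ft.
have [k0 [[t0 [sz0 Ht0 Ft0]] Hmax]] := bounded_max P0 Pb.
have Hx : forall x, X x -> exists g, W (x - lcf t0 g).
  move=> x Xx.
  have nF : ~ pfree W p (rcons t0 x).
    move=> F; have : P k0.+1.
      exists (rcons t0 x); split => //; first by rewrite size_rcons sz0.
      move=> i; rewrite size_rcons ltnS leq_eqVlt => /orP [/eqP ->|hi].
        by rewrite nth_rcons ltnn eqxx.
      by rewrite nth_rcons hi; apply: Ht0.
    by move/Hmax; rewrite ltnn.
  have [f Hf] := not_all_ex_not _ _ nF.
  have [Wf Hf2] := imply_to_and _ _ Hf.
  have [j Hj] := not_all_ex_not _ _ Hf2.
  have [hj ndj] := imply_to_and _ _ Hj.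
  rewrite lcf_rcons in Wf.
  have nda : ~~ ((Posz p) %| f (size t0))%Z.
    apply/negP => /dvdzP [q Eq].
    have Wl : W (lcf t0 f).
      have -> : lcf t0 f = (lcf t0 f + x *~ f (size t0)) - x *~ (q * (Posz p)) by rewrite Eq addrK.
      by apply: sgB => //; apply: pXW; apply: nmul_z.
    apply: ndj; move: hj; rewrite size_rcons ltnS leq_eqVlt => /orP [/eqP ->|hj].
      by rewrite Eq dvdz_mull // dvdzz.
    exact: Ft0 Wl j hj.
  have : coprimez (f (size t0)) (Posz p).
    by rewrite coprimezE coprime_sym prime_coprime //.
  move=> /coprimezP [[u v] /= Euv].
  exists (fun k => - (f k * u)).
  have -> : x - lcf t0 (fun k => - (f k * u)) =
      (lcf t0 f + x *~ f (size t0)) *~ u + x *~ (v * (Posz p)).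
    rewrite lcfN opprK lcfZ mulrzDl -mulrzA [f (size t0) * u]mulrC -addrA -mulrzDr Euv mulr1z.
    by rewrite addrC.
  apply: sgD => //; first exact: sgMz.
  by apply: pXW; apply: nmul_z.
have [s [Hs Hc]] := cover_span sX (prime_gt0 pp) Ht0.
exists s; split; first by move=> z /Hs.
move=> y Xy; have [g Hg] := Hx y Xy; have [z zs Hz] := Hc g.
exists z => //; have -> : y - z = (y - lcf t0 g) + (lcf t0 g - z) by rewrite addrA subrK.
by apply: sgD => //; apply: pXW.
Qed.

Lemma sum_pos_term (n j0 : nat) (F : nat -> nat) : (j0 < n)%N ->
  (F j0 <= \sum_(0 <= j < n) F j)%N.
Proof.
move=> hj; rewrite (bigD1_seq j0) /= ?mem_index_iota ?iota_uniq //.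
exact: leq_addr.
Qed.

Lemma not_indep (A : zmodType) (ys : seq A) : ~ lin_indep ys ->
  exists f, lcf ys f = 0 /\ exists2 j, (j < size ys)%N & f j != 0.
Proof.
move=> nI; apply: NNPP => Hn; apply: nI; apply: indep_of => f Hf i hi.
apply: NNPP => fi; apply: Hn; exists f; split => //; exists i => //; exact/eqP.
Qed.

Lemma rank_dep (A : zmodType) (X T : A -> Prop) (p r : nat) :
  prime p -> subgroup X -> subgroup T -> (forall x, T x -> X x) ->
  (forall w, X w -> T (w *+ p) -> T w) ->
  (forall s : seq A, lin_indep s -> (size s <= r)%N) ->
  forall ys : seq A, (forall i, (i < size ys)%N -> X ys`_i) -> (r < size ys)%N ->
  exists f, T (lcf ys f) /\ exists2 j, (j < size ys)%N & ~~ ((Posz p) %| f j)%Z.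
Proof.
move=> pp sX sT TX Tsat Hr ys Hys hr.
have nI : ~ lin_indep ys by move/Hr; rewrite leqNgt hr.
have [f0 [E0 H0]] := not_indep nI.
set n := size ys.
suff : forall N f, (\sum_(0 <= j < n) absz (f j) <= N)%N -> T (lcf ys f) ->
    (exists2 j, (j < n)%N & f j != 0) ->
    exists f, T (lcf ys f) /\ exists2 j, (j < n)%N & ~~ ((Posz p) %| f j)%Z.
  by move=> /(_ _ f0 (leqnn _)); apply => //; rewrite E0; exact: sg0.
elim=> [|N IH] f hN Tf [j0 hj0 fj0].
  have := leq_trans (sum_pos_term (fun j => absz (f j)) hj0) hN.
  by rewrite leqn0 absz_eq0 (negbTE fj0).
case: (classic (exists2 j, (j < n)%N & ~~ ((Posz p) %| f j)%Z)) => [Hj|Hn].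
  by exists f.
have Hd : forall j, (j < n)%N -> ((Posz p) %| f j)%Z.
  move=> j hj; apply: NNPP => nd; apply: Hn; exists j => //; exact/negP.
pose h j := (f j %/ (Posz p))%Z.
have Ef : forall j, (j < n)%N -> f j = h j * (Posz p) by move=> j hj; rewrite divzK // Hd.
have El : lcf ys f = lcf ys h *+ p.
  by rewrite pmulrn -lcfZ; apply: lcf_ext => j hj; rewrite Ef.
have Th : T (lcf ys h).
  by apply: Tsat; [apply: lcf_in | rewrite -El].
have hj0' : h j0 != 0.
  by apply/eqP => e; move: fj0; rewrite Ef // e mul0r eqxx.
have Es : (\sum_(0 <= j < n) absz (f j) = (\sum_(0 <= j < n) absz (h j)) * p)%N.
  rewrite big_distrl /=; apply: eq_big_nat => j /andP [_ hj].
  by rewrite Ef // abszM.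
have pos : (0 < \sum_(0 <= j < n) absz (h j))%N.
  apply: leq_trans (sum_pos_term (fun j => absz (h j)) hj0).
  by rewrite absz_gt0.
apply: (IH h) => //; last by exists j0.
rewrite -ltnS; apply: leq_trans hN; rewrite Es.
by rewrite ltn_Pmulr // prime_gt1.
Qed.

Lemma fq_prod (A : zmodType) (C : (A -> Prop) -> Prop) (q : nat) : (0 < q)%N ->
  (forall X, C X -> subgroup X) -> (forall X p, C X -> C (nmul p X)) ->
  (forall p X, prime p -> (p %| q)%N -> C X -> fin_quot X (nmul p X)) ->
  forall X, C X -> fin_quot X (nmul q X).
Proof.
elim/ltn_ind: q => q IH q0 Csg Cm Hp X CX.
case: (ltngtP q 1) => [q1|q1|->].
- by move: q0; rewrite lt0n; move: q1; rewrite ltnS leqn0 => ->.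
- pose p := pdiv q.
  have pp : prime p by apply: pdiv_prime.
  have pq : (p %| q)%N by apply: pdiv_dvd.
  pose q' := (q %/ p)%N.
  have Eq : q = (p * q')%N by rewrite mulnC divnK.
  have q'q : (q' < q)%N by apply: ltn_Pdiv => //; apply: prime_gt1.
  have q'0 : (0 < q')%N by rewrite divn_gt0 ?prime_gt0 // dvdn_leq.
  apply: (fq_trans (Z := nmul p X)); first exact: Csg.
  - by apply: nmul_sub; exact: Csg.
  - by apply: Hp.
  - apply: (fq_mono (X := nmul q' (nmul p X))).
      by move=> x /nmulM; rewrite -Eq.
    apply: IH => //; last by apply: Cm.
    move=> p0 X0 pp0 d0 C0; apply: Hp => //; apply: dvdn_trans d0 _.
    by rewrite Eq dvdn_mull.
- apply: (fq_mono (X := X)); first by move=> x /nmul1.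
  by apply: fq_refl; exact: Csg.
Qed.

Lemma sg_ext (A : zmodType) (X Y : A -> Prop) : (forall x, X x <-> Y x) -> subgroup X -> subgroup Y.
Proof. move=> H [H0 H1]; split; first exact/H.
by move=> x y /H Hx /H Hy; apply/H; apply: H1. Qed.

Lemma kill_up (A : zmodType) (x : A) q e e' : x *+ q ^ e = 0 -> (e <= e')%N -> x *+ q ^ e' = 0.
Proof. by move=> H le; rewrite -(subnKC le) expnD mulrnA H mul0rn. Qed.

Lemma kill_seq (A : zmodType) (S : A -> Prop) q (F : seq A) :
  (forall x, S x -> exists e, x *+ q ^ e = 0) -> (forall f, f \in F -> S f) ->
  exists e, forall f, f \in F -> f *+ q ^ e = 0.
Proof.
move=> HS; elim: F => [|a F IH] HF; first by exists 0%N.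
have [e1 H1] := HS a (HF a (mem_head _ _)).
have HF' : forall f, f \in F -> S f by move=> f hf; apply: HF; rewrite inE hf orbT.
have [e2 H2] := IH HF'.
exists (maxn e1 e2) => f; rewrite inE => /orP [/eqP ->|hf].
  by apply: kill_up H1 _; rewrite leq_maxl.
by apply: kill_up (H2 f hf) _; rewrite leq_maxr.
Qed.

Definition Einf (A : zmodType) (q : nat) (Y : A -> Prop) : A -> Prop :=
  fun y => forall k, exists x, Y x /\ y = x *+ q ^ k.

Lemma Einf_mono (A : zmodType) q (Y Y' : A -> Prop) :
  (forall x, Y x -> Y' x) -> forall y, Einf q Y y -> Einf q Y' y.
Proof. by move=> H y Hy k; have [x [Hx ->]] := Hy k; exists x; split => //; apply: H. Qed.

Lemma Einf_sub (A : zmodType) q (Y : A -> Prop) y : Einf q Y y -> Y y.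
Proof. by move=> /(_ 0%N) [x [Hx ->]]; rewrite expn0 mulr1n. Qed.


Lemma Einf_spec (A : zmodType) (S : A -> Prop) (q : nat) (Y : A -> Prop) :
  (forall x, S x -> exists e, x *+ q ^ e = 0) ->
  subgroup Y -> (forall y, Y y -> S y) -> fin_quot Y (nmul q Y) ->
  exists e, (forall y, Einf q Y y <-> nmul (q ^ e) Y y) /\
            (forall y, nmul (q ^ e) Y y -> nmul (q ^ e.+1) Y y).
Proof.
move=> HS sY YS [F [HF1 HF2]].
have [e He] := kill_seq HS (fun f hf => YS f (HF1 f hf)).
have step : forall y, Y y -> exists y', Y y' /\ y *+ q ^ e = y' *+ q ^ e.+1.
  move=> y Yy; have [f hf [y1 [Y1 E1]]] := HF2 y Yy.
  exists y1; split => //.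
  have -> : y = f + y1 *+ q by rewrite -E1 addrC subrK.
  by rewrite mulrnDl He // add0r -mulrnA -expnS.
have iter : forall k y, Y y -> exists y', Y y' /\ y *+ q ^ e = y' *+ q ^ (e + k).
  elim=> [|k IH] y Yy; first by exists y; rewrite addn0.
  have [y' [Y' E']] := IH y Yy; have [y'' [Y'' E'']] := step y' Y'.
  by exists y''; split => //; rewrite E' expnD mulrnA E'' -mulrnA -expnD addSnnS.
exists e; split.
  move=> y; split; first by move/(_ e).
  move=> [x [Yx ->]] k; case: (leqP k e) => hk.
    exists (x *+ q ^ (e - k)); split; first exact: sgMn.
    by rewrite -mulrnA -expnD subnK.
  have [y' [Y' E']] := iter (k - e)%N x Yx.
  by exists y'; rewrite E' subnKC // ltnW.
move=> _ [x [Yx ->]]; have [y' [Y' E']] := step x Yx; by exists y'.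
Qed.

Lemma Einf_div (A : zmodType) q (Y : A -> Prop) e :
  (forall y, Einf q Y y <-> nmul (q ^ e) Y y) ->
  (forall y, nmul (q ^ e) Y y -> nmul (q ^ e.+1) Y y) ->
  forall d, Einf q Y d -> exists d', Einf q Y d' /\ d = d' *+ q.
Proof.
move=> H1 H2 d /H1 /H2 [x [Yx ->]]; exists (x *+ q ^ e); split.
  by apply/H1; exists x.
by rewrite expnSr mulrnA.
Qed.

Lemma fq_pow (A : zmodType) (S : A -> Prop) (q : nat) (Y : A -> Prop) :
  (forall X, subgroup X -> (forall x, X x -> S x) -> fin_quot X (nmul q X)) ->
  subgroup Y -> (forall y, Y y -> S y) -> forall k, fin_quot Y (nmul (q ^ k) Y).
Proof.
move=> Hq sY YS; elim=> [|k IH].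
  by apply: (fq_mono (X := Y)); [move=> x /nmul1|exact: fq_refl].
apply: (fq_trans (Z := nmul (q ^ k) Y)) => //.
  by apply: nmul_sub.
apply: (fq_mono (X := nmul q (nmul (q ^ k) Y))).
  by move=> x /nmulM; rewrite -expnSr.
apply: Hq; first exact: sg_nmul.
by move=> x /(nmul_sub sY) /YS.
Qed.

Lemma Einf_sat (A : zmodType) q (D D' : A -> Prop) :
  subgroup D -> subgroup D' -> (forall x, D' x -> D x) ->
  (forall d, D' d -> exists d', D' d' /\ d = d' *+ q) ->
  (forall d, D d -> d *+ q = 0 -> D' d) ->
  forall e d, D d -> d *+ q ^ e = 0 -> D' d.
Proof.
move=> sD sD' D'D Ddiv Dsoc; elim=> [|e IH] d Dd.
  by rewrite expn0 mulr1n => ->; exact: sg0.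
rewrite expnS mulrnA => Hd.
have D'q : D' (d *+ q) by apply: IH => //; apply: sgMn.
have [d'' [D'' Ed]] := Ddiv _ D'q.
have D'diff : D' (d - d'').
  apply: Dsoc; first by apply: sgB => //; apply: D'D.
  by rewrite mulrnBl Ed subrr.
by rewrite -(subrK d'' d); apply: sgD.
Qed.

Lemma chain_le (A : Type) (P : nat -> A -> Prop) :
  (forall i x, P i.+1 x -> P i x) -> forall i j x, (i <= j)%N -> P j x -> P i x.
Proof.
move=> H i j x; elim: j => [|j IH]; first by rewrite leqn0 => /eqP ->.
rewrite leq_eqVlt => /orP [/eqP -> //|hij] Pj.
by apply: IH; [rewrite -ltnS|apply: H].
Qed.

Lemma stab_seq (A : eqType) (P : nat -> A -> Prop) (F : seq A) :
  (forall i x, P i.+1 x -> P i x) ->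
  exists N, forall i, (N <= i)%N -> forall f, f \in F -> (P i f <-> P N f).
Proof.
move=> H; elim: F => [|a F [N' HN']]; first by exists 0%N.
case: (classic (forall i, P i a)) => [Ha|].
  exists N' => i hi f; rewrite inE => /orP [/eqP ->|hf]; first by split=> _; apply: Ha.
  exact: HN'.
move=> /not_all_ex_not [i0 Hi0].
exists (maxn N' i0) => i hi f; rewrite inE => /orP [/eqP ->|hf].
  split=> Hp; exfalso; apply: Hi0; apply: (chain_le H _ Hp).
  - by apply: leq_trans hi; rewrite leq_maxr.
  - by rewrite leq_maxr.
have h1 : (N' <= i)%N by apply: leq_trans hi; rewrite leq_maxl.
have h2 : (N' <= maxn N' i0)%N by rewrite leq_maxl.
by rewrite (HN' i h1 f hf) (HN' _ h2 f hf).
Qed.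

Lemma gen_min (A : zmodType) (S : A -> Prop) (q : nat) :
  subgroup S -> (forall x, S x -> exists e, x *+ q ^ e = 0) ->
  (forall X, subgroup X -> (forall x, X x -> S x) -> fin_quot X (nmul q X)) ->
  min_cond S.
Proof.
move=> sS HS Hq X sX XS Xdec.
have Xch : forall i j x, (i <= j)%N -> X j x -> X i x by apply: chain_le.
pose Z := fun x => S x /\ x *+ q = 0.
have sZ : subgroup Z.
  split; first by split; [exact: sg0|rewrite mul0rn].
  by move=> x y [Sx Zx] [Sy Zy]; split; [apply: sgB|rewrite mulrnBl Zx Zy subrr].
have [F0 [_ HF0]] := Hq Z sZ (fun x (h : Z x) => proj1 h).
have ZF : forall z, Z z -> z \in F0.
  move=> z Zz; have [f hf [x [[_ Zx] Ex]]] := HF0 z Zz.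
  by move: Ex; rewrite Zx => /eqP; rewrite subr_eq0 => /eqP ->.
pose E i := Einf q (X i).
have Especs : forall i, exists e, (forall y, E i y <-> nmul (q ^ e) (X i) y) /\
    (forall y, nmul (q ^ e) (X i) y -> nmul (q ^ e.+1) (X i) y).
  move=> i; apply: (Einf_spec HS) => //; [exact: XS | apply: Hq => //; exact: XS].
have sE : forall i, subgroup (E i).
  move=> i; have [e [H1 _]] := Especs i.
  by apply: (sg_ext (X := nmul (q ^ e) (X i))); [move=> y; split=> /H1|apply: sg_nmul].
have Ediv : forall i d, E i d -> exists d', E i d' /\ d = d' *+ q.
  by move=> i; have [e [H1 H2]] := Especs i; apply: Einf_div H1 H2.
have Edec : forall i x, E i.+1 x -> E i x.
  by move=> i; apply: Einf_mono; apply: Xdec.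
have [N1 HN1] := stab_seq F0 Edec.
have ED : forall i, (N1 <= i)%N -> forall x, E i x <-> E N1 x.
  move=> i hi x; split; first by apply: (chain_le Edec).
  move=> HD; have [e He] := HS x (XS _ _ (Einf_sub HD)).
  apply: (Einf_sat (sE N1) (sE i) _ _ _ HD He).
  - by move=> y; apply: (chain_le Edec).
  - exact: Ediv.
  - move=> d Dd dq; apply/(HN1 i hi d); last by [].
    by apply: ZF; split => //; apply: XS (Einf_sub Dd).
have [G [_ HG]] : fin_quot (X N1) (E N1).
  have [e [H1 _]] := Especs N1.
  apply: (fq_mono (X := nmul (q ^ e) (X N1))); first by move=> y /H1.
  by apply: (fq_pow Hq) => //; exact: XS.
have [N2 HN2] := stab_seq G Xdec.
exists (maxn N1 N2) => i hi x; set N := maxn N1 N2.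
have hN1 : (N1 <= N)%N by rewrite leq_maxl.
have hN2 : (N2 <= N)%N by rewrite leq_maxr.
split; first by apply: Xch.
move=> XNx; have [g hg Hg] := HG x (Xch _ _ _ hN1 XNx).
have Ei : E i (x - g) by apply/(ED i (leq_trans hN1 hi)).
have EN : E N (x - g) by apply/(ED N hN1).
have XNg : X N g.
  have -> : g = x - (x - g) by rewrite opprB addrC subrK.
  by apply: sgB => //; apply: Einf_sub EN.
have Xig : X i g.
  apply/(HN2 i (leq_trans hN2 hi) g hg); apply/(HN2 N hN2 g hg); exact: XNg.
by rewrite -(subrK g x); apply: sgD => //; apply: Einf_sub Ei.
Qed.

Lemma min_quot (A : zmodType) (S X : A -> Prop) (p : nat) :
  prime p -> min_cond S -> subgroup X -> (forall x, X x -> S x) ->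
  fin_quot X (nmul p X).
Proof.
move=> pp MS sX XS; apply: NNPP => Hnf.
have H : forall t : seq A, exists x, (forall i, (i < size t)%N -> X t`_i) ->
    X x /\ forall g, ~ nmul p X (x - lcf t g).
  move=> t; case: (classic (forall i, (i < size t)%N -> X t`_i)) => Ht; last first.
    by exists 0.
  apply: NNPP => Hne; apply: Hnf.
  have [s [Hs Hc]] := cover_span sX (prime_gt0 pp) Ht.
  exists s; split => // y Xy.
  have [g Hg] : exists g, nmul p X (y - lcf t g).
    apply: NNPP => Hn; apply: Hne; exists y => _; split => // g Hg; apply: Hn; by exists g.
  have [z zs Hz] := Hc g; exists z => //.
  have -> : y - z = (y - lcf t g) + (lcf t g - z) by rewrite addrA subrK.
  by apply: sgD => //; apply: sg_nmul.
pose nx t := proj1_sig (constructive_indefinite_description _ (H t)).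
have Hnx : forall t, (forall i, (i < size t)%N -> X t`_i) ->
    X (nx t) /\ forall g, ~ nmul p X (nx t - lcf t g).
  move=> t; exact: (proj2_sig (constructive_indefinite_description _ (H t))).
pose sq := fix sq n := if n is n'.+1 then rcons (sq n') (nx (sq n')) else [::].
pose x i := nx (sq i).
have Esq : forall M, sq M = mkseq x M by elim=> [//|M IH]; rewrite mkseqS -IH.
have Xsq : forall M i, (i < size (sq M))%N -> X (sq M)`_i.
  elim=> [//|M IH] i; rewrite /= size_rcons ltnS leq_eqVlt nth_rcons.
  case/orP => [/eqP ->|hi]; first by rewrite ltnn eqxx; case: (Hnx _ IH).
  by rewrite hi; apply: IH.
have Xx : forall i, X (x i) by move=> i; case: (Hnx _ (Xsq i)).
have Nx : forall M g, ~ nmul p X (x M - lcf (mkseq x M) g).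
  by move=> M g; rewrite -Esq; case: (Hnx _ (Xsq M)) => _; apply.
pose Xc i y := exists M h, (forall j, (j < i)%N -> h j = 0) /\ nmul p X (y - lcf (mkseq x M) h).
have sXc : forall i, subgroup (Xc i).
  move=> i; split.
    exists 0%N, (fun _ => 0); split => //; rewrite lcf0 subr0; exists 0; split; [exact: sg0|by rewrite mul0rn].
  move=> y1 y2 [M1 [h1 [H1 E1]]] [M2 [h2 [H2 E2]]].
  exists (maxn M1 M2), (fun k => (if (k < M1)%N then h1 k else 0) - (if (k < M2)%N then h2 k else 0)).
  split; first by move=> j hj; rewrite H1 // H2 // !if_same subrr.
  rewrite lcfB -!lcf_mk_ext ?leq_maxl ?leq_maxr //.
  have -> : y1 - y2 - (lcf (mkseq x M1) h1 - lcf (mkseq x M2) h2) =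
     (y1 - lcf (mkseq x M1) h1) - (y2 - lcf (mkseq x M2) h2).
    by rewrite !opprB addrACA [RHS]addrACA; congr (_ + _); rewrite addrC.
  by apply: sgB => //; apply: sg_nmul.
have XcS : forall i y, Xc i y -> S y.
  move=> i y [M [h [_ Hy]]]; apply: XS.
  rewrite -(subrK (lcf (mkseq x M) h) y); apply: sgD => //.
    exact: nmul_sub Hy.
  by apply: lcf_in => // k; rewrite size_mkseq => hk; rewrite nth_mkseq.
have Xcdec : forall i y, Xc i.+1 y -> Xc i y.
  move=> i y [M [h [Hh Hy]]]; exists M, h; split => // j hj; apply: Hh; exact: ltnW.
have [N0 HN0] := MS Xc sXc XcS Xcdec.
have x0in : Xc N0 (x N0).
  exists N0.+1, (fun k => if k == N0 then 1 else 0); split.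
    by move=> j hj; rewrite (ltn_eqF hj).
  rewrite lcf_delta ?size_mkseq // nth_mkseq // mulr1z subrr.
  by exists 0; split; [exact: sg0|rewrite mul0rn].
have := (HN0 N0.+1 (leqnSn _) (x N0)).2 x0in.
move=> [M [h [Hh Hy]]]; move: M h Hh Hy.
elim=> [|M IH] h Hh Hy.
  by apply: (Nx N0 (fun _ => 0)); rewrite lcf0 subr0; move: Hy; rewrite lcf_nil subr0.
move: Hy; rewrite mkseqS lcf_rcons size_mkseq.
case: (leqP M N0) => hM.
  by rewrite Hh ?ltnS // mulr0z addr0; apply: IH.
case: (classic ((Posz p) %| h M)%Z) => [/dvdzP [c Ec]|nd].
  move=> Hy; apply: (IH h Hh).
  have -> : x N0 - lcf (mkseq x M) h =
      (x N0 - (lcf (mkseq x M) h + x M *~ h M)) + x M *~ (c * Posz p).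
    by rewrite -Ec opprD addrA subrK.
  by apply: sgD => //; [apply: sg_nmul|apply: nmul_z].
have : coprimez (h M) (Posz p).
  by rewrite coprimezE coprime_sym prime_coprime //; apply/negP.
move=> /coprimezP [[u v] /= Euv] Hy.
apply: (Nx M (fun k => ((if k == N0 then 1 else 0) - h k) * u)).
set L := lcf (mkseq x M) h.
set T := x N0 - (L + x M *~ h M).
have E1 : lcf (mkseq x M) (fun k => ((if k == N0 then 1 else 0) - h k) * u) = (x N0 - L) *~ u.
  by rewrite lcfZ lcfB lcf_delta ?size_mkseq // nth_mkseq // mulr1z.
have E2 : x N0 - L = T + x M *~ h M by rewrite /T opprD addrA subrK.
have E3 : x M = x M *~ (h M * u) + x M *~ (v * Posz p) by rewrite -mulrzDr mulrC Euv.
have E4 : forall a b c : A, (a + b) - (c + a) = b - c.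
  by move=> a b c; rewrite [c + a]addrC opprD addrA [a + b]addrC addrK.
rewrite E1 E2 mulrzDl {1}E3 mulrzA E4.
apply: sgB; [exact: sg_nmul|exact: nmul_z|apply: sgMz => //; exact: sg_nmul].
Qed.

Lemma cop_int (a : int) p k : prime p -> ~~ (Posz p %| a)%Z -> coprimez a (Posz (p ^ k)).
Proof. by move=> pp nd; rewrite coprimezE /=; apply: coprimeXr; rewrite coprime_sym prime_coprime. Qed.

Lemma mulzn_kill (A : zmodType) (y : A) (v : int) N : y *+ N = 0 -> y *~ (v * Posz N) = 0.
Proof. by move=> H; rewrite mulrzA mulrzAC -pmulrn H mul0rz. Qed.

Lemma bez_inv (A : zmodType) (a : int) (N : nat) : coprimez a (Posz N) ->
  exists u : int, forall y : A, y *+ N = 0 -> y *~ (u * a) = y.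
Proof.
move=> /coprimezP [[u v] /= Euv]; exists u => y Hy.
by rewrite -[in RHS](mulr1z y) -Euv mulrzDr mulzn_kill // addr0.
Qed.

Lemma alpha_cong (alpha : nat -> nat -> int) p :
  (forall k, (alpha p k.+1 = alpha p k %[mod (p ^ k)%:Z])%Z) ->
  forall K k, (K <= k)%N -> (Posz (p ^ K) %| alpha p k - alpha p K)%Z.
Proof.
move=> H K; elim=> [|k IH]; first by rewrite leqn0 => /eqP ->; rewrite subrr dvdz0.
rewrite leq_eqVlt => /orP [/eqP ->|hk]; first by rewrite subrr dvdz0.
have -> : alpha p k.+1 - alpha p K = (alpha p k.+1 - alpha p k) + (alpha p k - alpha p K).
  by rewrite addrA subrK.
apply: rpredD; last exact: IH.
apply: (@dvdz_trans (Posz (p ^ k))); first by rewrite dvdzE /= dvdn_exp2l.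
by rewrite -eqz_mod_dvd; apply/eqP; apply: H.
Qed.

Lemma phi_cyc (A : zmodType) (phi : A -> A) (alpha : nat -> nat -> int) :
  endo phi -> (forall p k x, prime p -> x *+ (p ^ k) = 0 -> phi x = x *~ alpha p k) ->
  forall k x, (0 < k)%N -> x *+ k = 0 -> exists c, phi x = x *~ c.
Proof.
move=> e Ha; elim/ltn_ind => k IH x k0 xk.
case: (ltngtP k 1) => [k1|k1|k1].
- by move: k0; rewrite lt0n; move: k1; rewrite ltnS leqn0 => ->.
- pose p := pdiv k; have pp : prime p by apply: pdiv_prime.
  have [m cpm Ek] := pfactor_coprime pp k0.
  set a := logn p k in Ek.
  have a0 : (0 < a)%N by rewrite logn_gt0 mem_primes pp k0 pdiv_dvd.
  have m0 : (0 < m)%N by move: k0; rewrite Ek muln_gt0 => /andP [].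
  have mk : (m < k)%N.
    rewrite Ek -[X in (X < _)%N]muln1 ltn_pmul2l // -[1%N](expn0 p) ltn_exp2l //.
    exact: prime_gt1.
  have : coprimez (Posz (p ^ a)) (Posz m).
    by rewrite coprimezE /=; apply: coprimeXl.
  move=> /coprimezP [[u v] /= Euv].
  set x1 := x *~ (v * Posz m); set x2 := x *~ (u * Posz (p ^ a)).
  have Ex : x = x1 + x2 by rewrite /x1 /x2 -mulrzDr addrC Euv mulr1z.
  have k1' : x1 *+ p ^ a = 0.
    by rewrite /x1 pmulrn -mulrzA -mulrA -PoszM -Ek mulzn_kill.
  have k2' : x2 *+ m = 0.
    by rewrite /x2 pmulrn -mulrzA -mulrA -PoszM mulnC -Ek mulzn_kill.
  have [c' Hc'] := IH m mk x2 m0 k2'.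
  exists (v * Posz m * alpha p a + u * Posz (p ^ a) * c').
  by rewrite {1}Ex e (Ha p a x1 pp k1') Hc' /x1 /x2 -!mulrzA mulrzDr.
- by move: xk; rewrite k1 mulr1n => ->; exists 0; rewrite (endo0 e) mul0rz.
Qed.

Lemma pgrp_zero (A : zmodType) p : (forall x : A, x *+ p = 0 -> x = 0) ->
  forall k (x : A), x *+ p ^ k = 0 -> x = 0.
Proof.
move=> H; elim=> [|k IH] x; first by rewrite expn0 mulr1n.
by rewrite expnS mulrnA => /IH /H.
Qed.

Lemma pgrp_div (A : zmodType) (phi : A -> A) (alpha : nat -> nat -> int) p v K u0 :
  prime p -> p_group A p -> endo phi ->
  (forall k, (alpha p k.+1 = alpha p k %[mod (p ^ k)%:Z])%Z) ->
  (forall k x, x *+ (p ^ k) = 0 -> phi x = x *~ alpha p k) ->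
  (v < K)%N -> alpha p K = Posz (p ^ v) * u0 -> ~~ (Posz p %| u0)%Z ->
  forall X : A -> Prop, subgroup X -> forall x, X x ->
  exists y, X y /\ phi y = x *+ p ^ v.
Proof.
move=> pp pg e Hc Ha vK EK nd X sX x Xx.
have [k0 Hk0] := pg x.
set k := maxn k0 K.
have xk : x *+ p ^ k = 0 by apply: kill_up Hk0 _; rewrite leq_maxl.
have [t Et] : exists t, alpha p k - alpha p K = t * Posz (p ^ K).
  by apply/dvdzP; apply: alpha_cong => //; rewrite leq_maxr.
have EKv : Posz (p ^ K) = Posz (p ^ v) * Posz (p ^ (K - v)).
  by rewrite -PoszM -expnD subnKC // ltnW.
set u1 := u0 + t * Posz (p ^ (K - v)).
have Ek : alpha p k = Posz (p ^ v) * u1.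
  by rewrite -(subrK (alpha p K) (alpha p k)) Et EK EKv /u1 mulrDr addrC mulrCA.
have nd1 : ~~ (Posz p %| u1)%Z.
  apply/negP => H; apply: (negP nd).
  have -> : u0 = u1 - t * Posz (p ^ (K - v)) by rewrite /u1 addrK.
  apply: rpredB => //; apply: dvdz_mull.
  by rewrite dvdzE /= -{1}(expn1 p) dvdn_exp2l // subn_gt0.
have [w Hw] := bez_inv A (cop_int k pp nd1).
exists (x *~ w); split; first exact: sgMz.
have yk : (x *~ w) *+ p ^ k = 0 by rewrite pmulrn mulrzAC -pmulrn xk mul0rz.
by rewrite (Ha k _ yk) Ek -mulrzA mulrCA mulrC mulrzA (Hw x xk) -pmulrn.
Qed.

Lemma periodic_rank (A : zmodType) : periodic A -> finite_tf_rank A.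
Proof.
move=> Hp; exists 0%N => s Is; rewrite leqn0; apply/negP => /negP s0.
have hs : (0 < size s)%N by rewrite lt0n.
have [k k0 Hk] := Hp s`_0.
have := indep_coef Is (f := fun j => if j == 0%N then Posz k else 0) _ hs.
rewrite eqxx => H; move: k0; rewrite lt0n -[k]/(absz (Posz k)) H //.
by rewrite lcf_delta // -pmulrn Hk.
Qed.

Lemma nonper_of_inf (A : zmodType) : infinite_tf_rank A -> ~ periodic A.
Proof.
move=> Hi Hp; have [s [Is sz]] := Hi 1%N.
by have := periodic_rank Hp; move=> [r Hr]; have [s' [Is' sz']] := Hi r.+1; move: (Hr s' Is'); rewrite sz' ltnn.
Qed.

Lemma nonzero_li (A : zmodType) (phi : A -> A) : infinite_group A -> endo phi ->
  left_inertial phi -> nonzero_map phi.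
Proof.
move=> inf e li; apply: NNPP => nz.
have z : forall x, phi x = 0.
  move=> x; apply: NNPP => h; apply: nz; exists x; exact/eqP.
have [s [_ Hs]] := li _ (sg_true A).
apply: inf; exists s => x; have [y ys [_ [w [_ E]]]] := Hs x I.
by move: E; rewrite z => /eqP; rewrite subr_eq0 => /eqP ->.
Qed.

Lemma absz_mul (A : zmodType) (x : A) (n : int) :
  x *+ absz n = x *~ n \/ x *+ absz n = - (x *~ n).
Proof. case: n => k; first by left; rewrite pmulrn.
by right; rewrite NegzE mulrNz opprK pmulrn. Qed.

Lemma absz_in (A : zmodType) (X : A -> Prop) (x : A) (n : int) :
  subgroup X -> X (x *~ n) <-> X (x *+ absz n).
Proof.
move=> sX; case: (absz_mul x n) => ->; split=> // H; first exact: sgN.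
by rewrite -[_ *~ n]opprK; apply: sgN.
Qed.

Lemma absz_zero (A : zmodType) (x : A) (n : int) : x *~ n = 0 <-> x *+ absz n = 0.
Proof. by case: (absz_mul x n) => ->; split=> [->|] //; [rewrite oppr0|move/eqP; rewrite oppr_eq0 => /eqP]. Qed.

Lemma rm_inj (A : zmodType) (phi : A -> A) m n : rat_mult m n phi ->
  forall x : A, x *+ absz n = 0 -> x = 0.
Proof.
case=> n0 _ _ Hpi _ x Hx; apply: Hpi; exists (absz n); split => //.
by rewrite absz_gt0.
Qed.

Lemma rm_surj_nat (A : zmodType) (phi : A -> A) m n : rat_mult m n phi ->
  forall d, (d %| absz n)%N -> forall x : A, exists y, y *+ d = x.
Proof.
move=> rm; have [n0 _ Hdiv _ _] := rm.
elim/ltn_ind => d IH dn x.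
case: (ltngtP d 1) => [d1|d1|->]; last by exists x; rewrite mulr1n.
  move: d1; rewrite ltnS leqn0 => /eqP d0; move: dn; rewrite d0 dvd0n absz_eq0.
  by rewrite (negbTE n0).
pose p := pdiv d; have pp : prime p by apply: pdiv_prime.
have pd : (p %| d)%N by apply: pdiv_dvd.
have [y1 E1] := Hdiv p pp (dvdn_trans pd dn) x.
have d0 : (0 < d)%N by apply: ltnW.
have [y2 E2] := IH (d %/ p)%N (ltn_Pdiv (prime_gt1 pp) d0)
   (dvdn_trans (dvdn_div pd) dn) y1.
by exists y2; rewrite -E1 -E2 -mulrnA divnK.
Qed.

Lemma rm_surj (A : zmodType) (phi : A -> A) m n : rat_mult m n phi ->
  forall x : A, exists y, y *~ n = x.
Proof.
move=> rm x; have [y Ey] := rm_surj_nat rm (dvdnn _) x.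
case: (absz_mul y n) => E; first by exists y; rewrite -E.
by exists (- y); rewrite mulNrz -E.
Qed.

Lemma rm_m0 (A : zmodType) (phi : A -> A) m n : rat_mult m n phi -> endo phi ->
  nonzero_map phi -> m != 0.
Proof.
move=> rm e [x nx]; apply/eqP => m0; apply: (negP nx).
have [y <-] := rm_surj rm x; have [_ _ _ _ Hphi] := rm.
by rewrite Hphi m0 mulr0z.
Qed.

Lemma rm_int (A : zmodType) (phi : A -> A) m n : rat_mult m n phi -> absz n = 1%N ->
  int_mult phi.
Proof.
move=> rm n1; have [_ _ _ _ Hphi] := rm.
have nn : n * n = 1.
  by case: n n1 {rm Hphi} => [[|[|k]]|[|k]] //= _; rewrite NegzE mulrNN mulr1.
exists (n * m) => x.
by rewrite -{1}(mulr1z x) -nn mulrzA Hphi -mulrzA.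
Qed.

Lemma coprime_dvd1 (m n : int) : coprimez m n -> (n %| m)%Z -> absz n = 1%N.
Proof.
move=> cp /dvdzP [c Ec]; move: cp; rewrite Ec coprimezMl => /andP [_].
by rewrite coprimezE /coprime gcdnn => /eqP.
Qed.

Lemma inf_seq_of_nonfinite (A : zmodType) : ~ finite_tf_rank A ->
  forall N, exists s : seq A, lin_indep s /\ (N < size s)%N.
Proof.
move=> nF N; apply: NNPP => H; apply: nF; exists N => s Is.
rewrite leqNgt; apply/negP => h; apply: H; by exists s.
Qed.

Lemma R_fwd (A : zmodType) (phi : A -> A) : multiplication phi -> inertial phi ->
  finite_tf_rank A \/ int_mult phi.
Proof.
move=> [e [_ Hnp]] In.
case: (classic (finite_tf_rank A)) => [|nF]; [by left|right].
have np : ~ periodic A by move/periodic_rank.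
have [m [n rm]] := Hnp np; have [n0 cp _ _ Hphi] := rm.
apply: (rm_int rm); apply: (coprime_dvd1 cp).
have [x Ix] := indep_seq (inf_seq_of_nonfinite nF).
have [z [_ Hz]] := In (ispan x) (sg_ispan x).
have [i [j [hi hj ij Hij]]] : exists i j, [/\ (i <= size z)%N, (j <= size z)%N, i != j &
    ispan x (phi (x i) - phi (x j))].
  apply: pigeon; first exact: sg_ispan.
  move=> i _; apply: Hz; exists (phi (x i)), 0; rewrite addr0; split => //.
    by exists (x i); split => //; apply: ispan_x.
  by split => //; exact: (sg0 (sg_ispan x)).
have [M [g Eg]] := Hij.
set M' := maxn M (size z).+1.
have hM : (M <= M')%N by rewrite leq_maxl.
have hi' : (i < M')%N by apply: leq_trans (leq_maxr _ _); rewrite ltnS.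
have hj' : (j < M')%N by apply: leq_trans (leq_maxr _ _); rewrite ltnS.
rewrite (lcf_mk_ext _ _ hM) in Eg.
apply/dvdzP; eexists; apply: (core_rel (Ix M') hi' hj' ij).
by rewrite -Hphi (endoMz _ _ e) (endoB _ _ e) Eg.
Qed.

Lemma rank_quot_T (A : zmodType) (X T : A -> Prop) (p r : nat) :
  prime p -> subgroup X -> subgroup T -> (forall x, T x -> X x) ->
  (forall w, X w -> T (w *+ p) -> T w) ->
  (forall s : seq A, lin_indep s -> (size s <= r)%N) ->
  fin_quot X (sumg (nmul p X) T).
Proof.
move=> pp sX sT TX Tsat Hr.
apply: (rank_quot (p := p) (r := r)) => //.
- by apply: sg_sumg => //; apply: sg_nmul.
- by move=> x Hx; exists x, 0; rewrite addr0; split => //; split => //; exact: sg0.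
- move=> x [a [b [Ha [Hb ->]]]]; apply: sgD => //; [exact: nmul_sub Ha|exact: TX].
move=> ys Hys hr; have [f [Tf Hf]] := rank_dep pp sX sT TX Tsat Hr Hys hr.
exists f; split => //; exists 0, (lcf ys f); rewrite add0r; split => //.
by exists 0; split; [exact: sg0|rewrite mul0rn].
Qed.

Lemma fq_n (A : zmodType) (phi : A -> A) m n : rat_mult m n phi -> finite_tf_rank A ->
  forall X : A -> Prop, subgroup X -> fin_quot X (nmul (absz n) X).
Proof.
move=> rm [r Hr]; have [n0 _ _ _ _] := rm.
apply: (fq_prod (C := @subgroup A)) => //; first by rewrite absz_gt0.
  by move=> X p sX; apply: sg_nmul.
move=> p X pp pn sX.
have Tsat : forall w, X w -> w *+ p = 0 -> w = 0.
  move=> w _ wp; apply: (rm_inj rm); rewrite -(divnK pn) mulnC mulrnA wp mul0rn //.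
have TX : forall x : A, x = 0 -> X x by move=> x ->; exact: sg0.
have Tsat' : forall w, X w -> (fun x : A => x = 0) (w *+ p) -> w = 0 by [].
have := rank_quot_T pp sX (sg_zero A) TX Tsat' Hr.
apply: fq_mono => x [a [b [Ha [-> ->]]]]; by rewrite addr0.
Qed.

Lemma seq_choice (A B : eqType) (G : seq A) (R : A -> B -> Prop) :
  (forall g, g \in G -> exists h, R g h) ->
  exists H : seq B, (forall g, g \in G -> exists2 h, h \in H & R g h) /\
                    (forall h, h \in H -> exists2 g, g \in G & R g h).
Proof.
elim: G => [|a G IH] HG; first by exists [::].
have [ha Ha] := HG a (mem_head _ _).
have [H [H1 H2]] : exists H : seq B, (forall g, g \in G -> exists2 h, h \in H & R g h) /\
                    (forall h, h \in H -> exists2 g, g \in G & R g h).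
  by apply: IH => g hg; apply: HG; rewrite inE hg orbT.
exists (ha :: H); split.
  move=> g; rewrite inE => /orP [/eqP ->|hg]; first by exists ha; rewrite ?mem_head.
  by have [h hh Rh] := H1 g hg; exists h; rewrite // inE hh orbT.
move=> h; rewrite inE => /orP [/eqP ->|hh]; first by exists a; rewrite ?mem_head.
by have [g hg Rg] := H2 h hh; exists g; rewrite // inE hg orbT.
Qed.

Lemma R_bwd_rat (A : zmodType) (phi : A -> A) m n : rat_mult m n phi -> endo phi ->
  finite_tf_rank A -> inertial phi.
Proof.
move=> rm e fr X sX; have [n0 cp _ _ Hphi] := rm.
set q := absz n.
have [G [HG1 HG2]] := fq_n rm fr sX.
have [H [H1 H2]] := @seq_choice A A G (fun g h => h *+ q = g) (fun g _ => rm_surj_nat rm (dvdnn q) g).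
have [[a b] /= Eab] := coprimezP _ _ cp.
have hq_in : forall h, X (h *+ q) -> sumg (imageg phi X) X h.
  move=> h Xh; have Xn : X (h *~ n) by apply/(absz_in _ _ sX).
  exists (phi ((h *~ n) *~ a)), ((h *~ n) *~ b); split.
    by exists ((h *~ n) *~ a); split => //; apply: sgMz.
  split; first exact: sgMz.
  rewrite (endoMz _ _ e) Hphi -!mulrzA -mulrzDr [m * a]mulrC [n * b]mulrC Eab.
  by rewrite mulr1z.
exists H; split.
  move=> h /H2 [g hg Eg]; apply: hq_in; rewrite Eg; exact: HG1.
move=> y [_ [x2 [[x1 [Xx1 ->]] [Xx2 ->]]]].
have Xy : X ((phi x1 + x2) *+ q).
  apply/(absz_in (phi x1 + x2) n sX); rewrite mulrzDl -(endoMz _ _ e) Hphi.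
  by apply: sgD => //; apply: sgMz.
have [g hg [x' [Xx' Ex']]] := HG2 _ Xy.
have [h hh Eh] := H1 g hg; exists h => //.
have : (phi x1 + x2 - h - x') *+ q = 0.
  by rewrite !mulrnBl Eh -Ex' subrr.
move/(rm_inj rm)/eqP; rewrite subr_eq0 => /eqP ->; exact: Xx'.
Qed.

Lemma R_bwd_per (A : zmodType) (phi : A -> A) : periodic A -> padic_mult phi -> inertial phi.
Proof.
move=> Hp [e [alpha [_ Ha]]] X sX.
have Hc := phi_cyc e Ha.
apply: fq_sub => //; last first.
  by exists 0, 0; rewrite addr0; split; [exists 0; split; [exact: sg0|rewrite (endo0 e)]|split=> //; exact: sg0].
move=> _ [_ [x2 [[x1 [Xx1 ->]] [Xx2 ->]]]]; apply: sgD => //.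
have [k k0 Hk] := Hp x1; have [c ->] := Hc k x1 k0 Hk; exact: sgMz.
Qed.

Lemma R_bwd_int (A : zmodType) (phi : A -> A) : int_mult phi -> inertial phi.
Proof.
move=> [z Hz] X sX; apply: fq_sub => //; last first.
  by exists 0, 0; rewrite addr0; split; [exists 0; split; [exact: sg0|rewrite Hz mul0rz]|split=> //; exact: sg0].
move=> _ [_ [x2 [[x1 [Xx1 ->]] [Xx2 ->]]]]; apply: sgD => //; rewrite Hz; exact: sgMz.
Qed.

Lemma R_part (A : zmodType) (phi : A -> A) : multiplication phi ->
  (inertial phi <-> (finite_tf_rank A \/ int_mult phi)).
Proof.
move=> mu; split; first exact: R_fwd.
case=> [fr|]; last exact: R_bwd_int.
have [e [Hper Hnp]] := mu.
case: (classic (periodic A)) => Hp; first exact: R_bwd_per (Hper Hp).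
have [m [n rm]] := Hnp Hp; exact: R_bwd_rat rm e fr.
Qed.

Lemma pgrp_periodic (A : zmodType) p : prime p -> p_group A p -> periodic A.
Proof. by move=> pp pg x; have [k Hk] := pg x; exists (p ^ k)%N; rewrite ?expn_gt0 ?prime_gt0. Qed.

Lemma fq_incl (A : zmodType) (X W : A -> Prop) : subgroup X ->
  (forall x, X x -> W x) -> fin_quot X W.
Proof.
move=> sX H; exists [:: 0]; split; first by move=> z; rewrite inE => /eqP ->; exact: sg0.
by move=> y Hy; exists 0; rewrite ?inE // subr0; apply: H.
Qed.

Lemma alpha_p1 (alpha : nat -> nat -> int) p k :
  (forall k, (alpha p k.+1 = alpha p k %[mod (p ^ k)%:Z])%Z) -> (0 < k)%N ->
  (Posz p %| alpha p k)%Z = (Posz p %| alpha p 1%N)%Z.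
Proof.
move=> Hc k0; have := alpha_cong Hc k0; rewrite expn1 => H.
apply/idP/idP => h.
  have -> : alpha p 1%N = alpha p k - (alpha p k - alpha p 1%N) by rewrite opprB addrC subrK.
  exact: rpredB.
have -> : alpha p k = (alpha p k - alpha p 1%N) + alpha p 1%N by rewrite subrK.
exact: rpredD.
Qed.

Lemma kill_pos (A : zmodType) p (x : A) : p_group A p -> exists k, (0 < k)%N /\ x *+ p ^ k = 0.
Proof.
move=> pg; have [k Hk] := pg x; exists k.+1; split => //.
by apply: kill_up Hk _.
Qed.

Lemma L1_part (A : zmodType) (phi : A -> A) p : infinite_group A -> multiplication phi ->
  prime p -> p_group A p ->
  (left_inertial phi <-> (bijective phi \/ (min_cond (fun _ : A => True) /\ nonzero_map phi))).
Proof.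
move=> inf [e [Hper _]] pp pg.
have [_ [alpha [Hc' Ha']]] := Hper (pgrp_periodic pp pg).
have Hc : forall k, (alpha p k.+1 = alpha p k %[mod (p ^ k)%:Z])%Z by move=> k; apply: Hc'.
have Ha : forall k x, x *+ (p ^ k) = 0 -> phi x = x *~ alpha p k.
  by move=> k x; apply: Ha'.
have div0 : ~~ (Posz p %| alpha p 1%N)%Z -> forall X : A -> Prop, subgroup X ->
    forall x, X x -> exists y, X y /\ phi y = x.
  move=> nd X sX x Xx.
  have E0 : alpha p 1%N = Posz (p ^ 0) * alpha p 1%N by rewrite expn0 mul1r.
  have [y [Xy Ey]] := @pgrp_div A phi alpha p 0 1 (alpha p 1%N) pp pg e Hc Ha
    (ltn0Sn 0) E0 nd X sX x Xx.
  by exists y; rewrite Ey expn0 mulr1n.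
split.
- move=> li; have nz := nonzero_li inf e li.
  case: (classic (Posz p %| alpha p 1%N)%Z) => hd.
    right; split => //.
    apply: (gen_min (q := p)) => //.
    move=> X sX _; have := li X sX; apply: fq_mono => y [Xy [x [Xx ->]]] {Xy}.
    have [k [k0 Hk]] := kill_pos x pg.
    have : (Posz p %| alpha p k)%Z by rewrite (alpha_p1 Hc k0).
    move/dvdzP => [c Ec]; rewrite (Ha k x Hk) Ec; exact: nmul_z.
  left.
  have surj : forall x, exists y, phi y = x.
    move=> x; have [y [_ Ey]] := div0 (introN idP hd) _ (sg_true A) x I; by exists y.
  have inj : injective phi.
    move=> y1 y2 E; apply/eqP; rewrite -subr_eq0; apply/eqP.
    set d := y1 - y2.
    have Ed : phi d = 0 by rewrite /d (endoB _ _ e) E subrr.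
    have [k [k0 Hk]] := kill_pos d pg.
    have nd : ~~ (Posz p %| alpha p k)%Z by rewrite (alpha_p1 Hc k0); apply/negP.
    have [u Hu] := bez_inv A (cop_int k pp nd).
    by rewrite -(Hu d Hk) -mulrzA_C -(Ha k d Hk) Ed mul0rz.
  pose g x := proj1_sig (constructive_indefinite_description _ (surj x)).
  have Hg : forall x, phi (g x) = x.
    move=> x; exact: (proj2_sig (constructive_indefinite_description _ (surj x))).
  by exists g => x; [apply: inj; rewrite Hg|apply: Hg].
- case=> [bij|[MC [x0 nx0]]] X sX.
    have inj : injective phi by apply: bij_inj.
    have nd : ~~ (Posz p %| alpha p 1%N)%Z.
      apply/negP => /dvdzP [c Ec]; apply: inf; exists [:: 0] => x.
      have z1 : forall y : A, y *+ p = 0 -> y = 0.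
        move=> y yp; apply: inj; rewrite (endo0 e) (Ha 1%N y); last by rewrite expn1.
        by rewrite Ec mulzn_kill.
      have [k Hk] := pg x; rewrite (pgrp_zero z1 Hk) mem_head //.
    apply: fq_incl => // x Xx; split => //.
    by have [y [Xy Ey]] := div0 nd X sX x Xx; exists y.
  have [K [K0 HK]] := kill_pos x0 pg.
  set a := alpha p K.
  have a0 : a != 0 by apply/eqP => a0; move: nx0; rewrite (Ha K x0 HK) -/a a0 mulr0z eqxx.
  have a0' : (0 < `|a|)%N by rewrite absz_gt0.
  have [m cpm Ea] := pfactor_coprime pp a0'.
  set v := logn p `|a| in Ea.
  have vK : (v < K)%N.
    rewrite ltnNge; apply/negP => Kv; move: nx0.
    have : (Posz (p ^ K) %| a)%Z.
      rewrite dvdzE /= Ea; apply: dvdn_mull; exact: dvdn_exp2l.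
    by move/dvdzP => [c Ec]; rewrite (Ha K x0 HK) -/a Ec mulzn_kill // eqxx.
  set u0 := (-1) ^+ (a < 0)%R * Posz m.
  have EK : a = Posz (p ^ v) * u0.
    by rewrite {1}(intEsign a) Ea PoszM /u0 [RHS]mulrCA [Posz m * _]mulrC.
  have nd : ~~ (Posz p %| u0)%Z.
    rewrite dvdzE /u0 abszM absz_sign mul1n /=.
    by rewrite -prime_coprime.
  have Hq : forall Y : A -> Prop, subgroup Y -> (forall y, Y y -> True) -> fin_quot Y (nmul p Y).
    by move=> Y sY _; apply: (min_quot pp MC sY).
  have := fq_pow Hq sX (fun _ _ => I) v.
  apply: fq_mono => _ [x [Xx ->]]; split; first exact: sgMn.
  have [y [Xy Ey]] := @pgrp_div A phi alpha p v K u0 pp pg e Hc Ha vK EK nd X sX x Xx.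
  by exists y.
Qed.

Lemma sg_pi (A : zmodType) (m : int) : subgroup (@pi_component A m).
Proof.
split; first by exists 1%N; split => // p pp; rewrite dvdn1 => /eqP p1; move: pp; rewrite p1.
move=> x y [k1 [k10 H1 E1]] [k2 [k20 H2 E2]]; exists (k1 * k2)%N; split.
- by rewrite muln_gt0 k10.
- by move=> p pp; rewrite Euclid_dvdM // => /orP [/H1|/H2]; apply.
- by rewrite mulrnBl mulrnA E1 mulnC mulrnA E2 !mul0rn subrr.
Qed.

Lemma pi_pow (k q : nat) : (0 < k)%N -> (forall p, prime p -> (p %| k)%N -> (p %| q)%N) ->
  (k %| q ^ k)%N.
Proof.
elim/ltn_ind: k => k IH k0 Hk.
case: (ltngtP k 1) => [k1|k1|->]; last by rewrite dvd1n.
  by move: k0; rewrite lt0n; move: k1; rewrite ltnS leqn0 => ->.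
pose p := pdiv k; have pp : prime p by apply: pdiv_prime.
have pk : (p %| k)%N by apply: pdiv_dvd.
pose k' := (k %/ p)%N.
have Ek : k = (p * k')%N by rewrite mulnC divnK.
have k'k : (k' < k)%N by apply: ltn_Pdiv => //; apply: prime_gt1.
have k'0 : (0 < k')%N by rewrite divn_gt0 ?prime_gt0 // dvdn_leq.
have k'd : (k' %| k)%N by rewrite [X in (_ %| X)%N]Ek dvdn_mull.
have H' := IH k' k'k k'0 (fun p0 pp0 d0 => Hk p0 pp0 (dvdn_trans d0 k'd)).
apply: (@dvdn_trans (q ^ k'.+1)).
  by rewrite {1}Ek expnS; apply: dvdn_mul => //; apply: Hk.
by apply: dvdn_exp2l; rewrite [X in (_ <= X)%N]Ek ltn_Pmull // prime_gt1.
Qed.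

Lemma cop_pi (m n : int) (k : nat) : coprimez m n -> (0 < k)%N ->
  (forall p, prime p -> (p %| k)%N -> (p %| (absz m))%N) -> coprime k (absz n).
Proof.
move=> cp k0 Hk; apply: NNPP => nc.
set g := gcdn k (absz n).
have g0 : (0 < g)%N by rewrite gcdn_gt0 k0.
have g1 : (1 < g)%N.
  by rewrite ltn_neqAle eq_sym g0 andbT; apply/negP => /eqP h; apply: nc; rewrite /coprime -/g h.
pose p := pdiv g; have pp : prime p by apply: pdiv_prime.
have : (p %| g)%N by apply: pdiv_dvd.
rewrite dvdn_gcd => /andP [pk pn].
have : (p %| gcdn (absz m) (absz n))%N by rewrite dvdn_gcd Hk.
move: cp; rewrite coprimezE /coprime => /eqP ->; rewrite dvdn1 => /eqP p1.
by move: pp; rewrite p1.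
Qed.

Lemma nmul_abs (A : zmodType) (X : A -> Prop) (y : A) (m : int) : subgroup X -> X y ->
  nmul (absz m) X (y *~ m).
Proof.
move=> sX Xy; case: (absz_mul y m) => E; first by exists y.
by exists (- y); split; [apply: sgN|rewrite mulNrn E opprK].
Qed.

Lemma pi_kill (A : zmodType) (m : int) (x : A) : m != 0 -> pi_component m x ->
  exists e, x *+ (absz m) ^ e = 0.
Proof.
move=> m0 [k [k0 Hk Ek]]; exists k.
have := pi_pow k0 Hk; move/dvdnP => [c ->]; by rewrite mulnC mulrnA Ek mul0rn.
Qed.

Lemma L2_part (A : zmodType) (phi : A -> A) m n : infinite_group A -> endo phi ->
  ~ periodic A -> finite_tf_rank A -> rat_mult m n phi ->
  (left_inertial phi <-> (min_cond (@pi_component A m) /\ nonzero_map phi)).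
Proof.
move=> inf e np fr rm; have [n0 cp Hdiv Hpin Hphi] := rm.
split.
- move=> li; have nz := nonzero_li inf e li; split => //.
  have m0 := rm_m0 rm e nz.
  apply: (gen_min (q := (absz m))); first exact: sg_pi.
    by move=> x; apply: pi_kill.
  move=> X sX XS; have := li X sX; apply: fq_mono => y [Xy [x [Xx Ey]]]; rewrite Ey {Ey Xy}.
  have [k [k0 Hk Ek]] := XS x Xx.
  have : coprimez (Posz k) n by rewrite coprimezE; apply: cop_pi cp k0 Hk.
  move=> /coprimezP [[u v] /= Euv].
  have -> : x = (x *~ v) *~ n.
    by rewrite -mulrzA -[in LHS](mulr1z x) -Euv mulrzDr mulzn_kill // add0r.
  rewrite Hphi; apply: nmul_abs => //; exact: sgMz.
- move=> [MC nz] X sX; have m0 := rm_m0 rm e nz.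
  apply: (fq_mono (X := nmul (absz m) X)).
    move=> _ [x [Xx ->]]; split; first exact: sgMn.
    case: (absz_mul x m) => ->.
      by exists (x *~ n); split; [apply: sgMz|rewrite Hphi].
    by exists (- (x *~ n)); split; [apply: sgN => //; apply: sgMz|rewrite endoN // Hphi].
  apply: (fq_prod (C := @subgroup A)) => //; first by rewrite absz_gt0.
    by move=> Y q sY; apply: sg_nmul.
  move=> p Y pp pm sY.
  pose T := fun x : A => Y x /\ exists k, x *+ p ^ k = 0.
  have sT : subgroup T.
    split; first by split; [exact: sg0|exists 0%N; rewrite mul0rn].
    move=> x y [Yx [k1 E1]] [Yy [k2 E2]]; split; first exact: sgB.
    exists (k1 + k2)%N; rewrite mulrnBl expnD mulrnA E1 mul0rn mulnC mulrnA E2 mul0rn subrr //.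
  have TY : forall x, T x -> Y x by move=> x [].
  have Tsat : forall w, Y w -> T (w *+ p) -> T w.
    by move=> w Yw [_ [k Ek]]; split => //; exists k.+1; rewrite expnS mulrnA.
  have TS : forall x, T x -> pi_component m x.
    move=> x [_ [k Ek]]; exists (p ^ k)%N; split => //; first by rewrite expn_gt0 prime_gt0.
    move=> q qp; rewrite Euclid_dvdX // => /andP [qd _].
    by move: qd; rewrite dvdn_prime2 // => /eqP ->.
  have [r Hr] := fr.
  have H1 := rank_quot_T pp sY sT TY Tsat Hr.
  have [G [HG1 HG2]] := min_quot pp MC sT TS.
  apply: (fq_trans (Z := sumg (nmul p Y) T)) => //.
    by move=> x [a [b [Ha [Hb ->]]]]; apply: sgD => //; [exact: nmul_sub Ha|exact: TY].
  exists G; split.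
    by move=> g hg; exists 0, g; rewrite add0r; split; [exact: sg0 (sg_nmul p sY)|split => //; exact: HG1].
  move=> _ [a [t [Ha [Tt ->]]]].
  have [g hg [t' [Tt' Et']]] := HG2 t Tt.
  exists g => //; rewrite -addrA Et'; apply: sgD => //; first exact: sg_nmul.
  by exists t'; split => //; apply: TY.
Qed.

Lemma L3_part (A : zmodType) (phi : A -> A) : multiplication phi -> infinite_tf_rank A ->
  (left_inertial phi <-> exists n : int, n != 0 /\ rat_mult 1 n phi).
Proof.
move=> [e [_ Hnp]] Hinf; split; last first.
  move=> [n [_ [_ _ _ _ Hphi]]] X sX; apply: fq_incl => // x Xx; split => //.
  by exists (x *~ n); split; [apply: sgMz|rewrite Hphi mulr1z].
move=> li.
have np := nonper_of_inf Hinf.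
have [m [n rm]] := Hnp np; have [n0 cp Hdiv Hpin Hphi] := rm.
have m1 : absz m = 1%N.
  apply: (coprime_dvd1 (m := n)); first by rewrite coprimez_sym.
  have [x Ix] : exists x : nat -> A, forall M, lin_indep (mkseq x M).
    apply: indep_seq => N; have [s [Is Es]] := Hinf N.+1; by exists s; split => //; rewrite Es ltnSn.
  have sQ : subgroup (capg (ispan x) (imageg phi (ispan x))).
    by apply: sg_capg; [exact: sg_ispan|apply: sg_image => //; exact: sg_ispan].
  have [z [_ Hz]] := li (ispan x) (sg_ispan x).
  have [i [j [hi hj ij Hij]]] := pigeon (w := x) sQ (fun i _ => Hz (x i) (ispan_x x i)).
  have [_ [y [[M [g Eg]] Ey]]] := Hij.
  set M' := maxn M (size z).+1.
  have hM : (M <= M')%N by rewrite leq_maxl.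
  have hi' : (i < M')%N by apply: leq_trans (leq_maxr _ _); rewrite ltnS.
  have hj' : (j < M')%N by apply: leq_trans (leq_maxr _ _); rewrite ltnS.
  rewrite (lcf_mk_ext _ _ hM) in Eg.
  apply/dvdzP; eexists; apply: (core_rel (Ix M') hi' hj' ij).
  by rewrite Ey -(endoMz _ _ e) Hphi Eg.
have Hm : m = 1 \/ m = -1.
  by case: m m1 {rm Hphi cp} => [[|[|k]]|[|k]] //= _; [left|right].
case: Hm => Em; first by exists n; split => //; rewrite -Em.
exists (- n); split; first by rewrite oppr_eq0.
split.
- by rewrite oppr_eq0.
- by rewrite coprimezN coprimezE coprime1n.
- by move=> p pp; rewrite abszN; apply: Hdiv.
- move=> x [k [k0 Hk Ex]]; apply: Hpin; exists k; split => // p pp pk; rewrite -abszN; exact: Hk.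
- by move=> x; rewrite mulrNz -mulNrz Hphi Em mulNrz mulrN1z opprK mulr1z.
Qed.


Local Close Scope ring_scope.

Theorem proposition2p1 (A : zmodType) (phi : A -> A) :
  infinite_group A -> multiplication phi ->
  (* (R) *)
  (inertial phi <-> (finite_tf_rank A \/ int_mult phi)) /\
  (* (L1) *)
  (forall p : nat, prime p -> p_group A p ->
     (left_inertial phi <->
        (bijective phi \/ (min_cond (fun _ : A => True) /\ nonzero_map phi)))) /\
  (* (L2) *)
  (forall m n : int, ~ periodic A -> finite_tf_rank A -> rat_mult m n phi ->
     (left_inertial phi <-> (min_cond (@pi_component A m) /\ nonzero_map phi))) /\
  (* (L3) *)
  (infinite_tf_rank A ->
     (left_inertial phi <-> exists n : int, n != 0%R /\ rat_mult 1%R n phi)).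
Proof.
move=> inf mu; split; first exact: R_part.
split; first by move=> p pp pg; exact: (L1_part inf mu pp pg).
split; first by move=> m n np fr rm; case: mu => e _; exact: (L2_part inf e np fr rm).
move=> Hi; exact: (L3_part mu Hi).
Qed.
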